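(* Let $\tau$ be an abstract path and let $x$ be a marker of $\tau$ at which one of the gluing moves Ia, Ib, II applies. Then the glued abstract path $\tilde q(\tau,x)$ satisfies $w(\tilde q(\tau,x))=w(\tau)-1$.
   Context: $\mathbb F=\{0,1\}$, $\mathbb N=\{0,1,2,\dots\}$. Abstract vertex types: $o$ (interior), $u$ (unstable), $s$ (stable); $u,s$ are boundary. An abstract edge is $\varepsilon=(\mu,(o_1,u_1,s_1),(o_2,u_2,s_2))\in\mathbb F\times\mathbb N^3\times\mathbb N^3$ such that if $\mu=0$ then $s_1=u_2=0$, and if $\mu=1$ then $o_1=o_2=0$ (interior if $\mu=0$, boundary if $\mu=1$; it has $X_1$ incoming and $X_2$ outgoing ends of type $X$). Its weight is $w(\varepsilon)=1$ if $\mu=0$ and $2-s_1-u_2$ if $\mu=1$. An abstract path $\tau=(T,\tau,\sigma)$: a non-empty finite directed tree $T=(V,E)$ (nodes; arrows, also called breaks; arrow $e$ from $s(e)$ to $t(e)$), $\tau:V\to$ abstract edges, $\sigma:E\to\{o,u,s\}$, such that for each node $v$ and type $X$, $X_1(v)\ge|\{e:t(e)=v,\sigma(e)=X\}|$ and $X_2(v)\ge|\{e:s(e)=v,\sigma(e)=X\}|$, where $X_i(v)$ are the entries of $\tau(v)$. Ends of $\tau$: $X_1(\tau)=\sum_vX_1(v)-|\sigma^{-1}(X)|$, $X_2(\tau)=\sum_vX_2(v)-|\sigma^{-1}(X)|$. Nodes are interior/boundary by $\mu(v)$. $\tau$ is legal if $s_1(\tau)=u_2(\tau)=0$. The restriction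 to a non-empty subtree is a subpath. Weight $w(\tau)=\sum_vw(\tau(v))$. $\mathrm{Star}^o(v)$ is the subtree induced by $v$ and its adjacent interior nodes. Gluing: contract a subtree $T'$ to a node $v^*$ (arrows between $T'$ and the rest reattached to $v^*$ with the same types; other data unchanged) and set $\tau(v^* )=(\mu^*,(o_1(\tau'),u_1(\tau'),s_1(\tau')),(o_2(\tau'),u_2(\tau'),s_2(\tau')))$ where $\tau'$ is the subpath on $T'$. Moves: (Ia) at an arrow both of whose endpoints are interior: contract that arrow, $\mu^*=0$; (Ib) at a boundary node $v$ whose subpath on $\mathrm{Star}^o(v)$ is legal: contract $\mathrm{Star}^o(v)$, $\mu^*=0$; (II) at an arrow both of whose endpoints are boundary: contract it, $\mu^*=1$. A marker is a node or an arrow; at most one move applies at a given marker, and the result is denoted $\tilde q(\tau,x)$. *)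

(* Defs.v *)
From HB Require Import structures.
From mathcomp Require Import all_boot all_order all_algebra.
Set Implicit Arguments. Unset Strict Implicit. Unset Printing Implicit Defensive.
Import GRing.Theory Num.Theory.

(* Abstract vertex types: o (interior), u (unstable), s (stable). *)
Inductive vtype := To | Tu | Ts.

Definition vtype_eqb (a b : vtype) : bool :=
  match a, b with To, To | Tu, Tu | Ts, Ts => true | _, _ => false end.
Lemma vtype_eqP : Equality.axiom vtype_eqb.
Proof. by case; case; constructor. Qed.
HB.instance Definition _ := hasDecEq.Build vtype vtype_eqP.

(* An abstract edge (mu, (o1,u1,s1), (o2,u2,s2)); mu = true means mu = 1
   (boundary), mu = false means mu = 0 (interior). *)
Record aedge := AEdge {
  mu : bool;
  o1 : nat; u1 : nat; s1 : nat;
  o2 : nat; u2 : nat; s2 : nat }.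

Definition valid_aedge (a : aedge) : bool :=
  if mu a then (o1 a == 0%N) && (o2 a == 0%N)
  else (s1 a == 0%N) && (u2 a == 0%N).

Definition ends1 (a : aedge) (X : vtype) : nat :=
  match X with To => o1 a | Tu => u1 a | Ts => s1 a end.
Definition ends2 (a : aedge) (X : vtype) : nat :=
  match X with To => o2 a | Tu => u2 a | Ts => s2 a end.

Definition wedge (a : aedge) : int :=
  if mu a then (Posz 2 - Posz (s1 a) - Posz (u2 a))%R else Posz 1.

(* Raw data of an abstract path: nodes, arrows (breaks) e from asrc e to
   atgt e, node labels tau, arrow types sigma. *)
Record apath := APath {
  node : finType;
  arrow : finType;
  asrc : arrow -> node;
  atgt : arrow -> node;
  alab : node -> aedge;
  asig : arrow -> vtype }.

Definition adj (p : apath) : rel (node p) :=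
  fun u v => [exists e : arrow p,
    ((asrc e == u) && (atgt e == v)) || ((asrc e == v) && (atgt e == u))].

(* (T, tau, sigma) is an abstract path: T a non-empty finite directed tree,
   tau valued in abstract edges, and the end-count constraints. *)
Definition is_apath (p : apath) : Prop :=
  [/\ (0 < #|node p|)%N,
      (#|arrow p|.+1 = #|node p|)%N,
      (forall u v : node p, connect (@adj p) u v),
      (forall v : node p, valid_aedge (alab v)) &
      (forall (v : node p) (X : vtype),
         (#|[set e : arrow p | (atgt e == v) && (asig e == X)]| <= ends1 (alab v) X)%N
         /\ (#|[set e : arrow p | (asrc e == v) && (asig e == X)]| <= ends2 (alab v) X)%N)].

Definition wpath (p : apath) : int := (\sum_(v : node p) wedge (alab v))%R.

Definition inner_arrows (p : apath) (S : {set node p}) (X : vtype) : nat :=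
  #|[set e : arrow p | (asrc e \in S) && (atgt e \in S) && (asig e == X)]|.

Definition sub_ends1 (p : apath) (S : {set node p}) (X : vtype) : nat :=
  ((\sum_(v in S) ends1 (alab v) X) - inner_arrows S X)%N.
Definition sub_ends2 (p : apath) (S : {set node p}) (X : vtype) : nat :=
  ((\sum_(v in S) ends2 (alab v) X) - inner_arrows S X)%N.

Definition sub_legal (p : apath) (S : {set node p}) : bool :=
  (sub_ends1 S Ts == 0%N) && (sub_ends2 S Tu == 0%N).

(* Gluing: contract the subtree S to a single new node v* (represented by
   None) with label (mu*, ends of the subpath on S); other data unchanged. *)
Definition glue (p : apath) (S : {set node p}) (mustar : bool) : apath :=
  let N := option {v : node p | v \notin S} in
  let A := {e : arrow p | ~~ ((asrc e \in S) && (atgt e \in S))} in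
  @APath N A
    (fun e => insub (asrc (val e)))
    (fun e => insub (atgt (val e)))
    (fun n => match n with
              | None => AEdge mustar
                          (sub_ends1 S To) (sub_ends1 S Tu) (sub_ends1 S Ts)
                          (sub_ends2 S To) (sub_ends2 S Tu) (sub_ends2 S Ts)
              | Some v => alab (val v)
              end)
    (fun e => asig (val e)).

Definition interior (p : apath) (v : node p) : bool := ~~ mu (alab v).
Definition boundary (p : apath) (v : node p) : bool := mu (alab v).

Definition star_o (p : apath) (v : node p) : {set node p} :=
  [set w | (w == v) || (interior w && @adj p v w)].

Definition marker (p : apath) : Type := (node p + arrow p)%type.

Definition move_Ia (p : apath) (e : arrow p) : bool :=
  interior (asrc e) && interior (atgt e).
Definition move_Ib (p : apath) (v : node p) : bool :=
  boundary v && sub_legal (star_o v).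
Definition move_II (p : apath) (e : arrow p) : bool :=
  boundary (asrc e) && boundary (atgt e).

Definition move_applies (p : apath) (x : marker p) : bool :=
  match x with
  | inl v => move_Ib v
  | inr e => move_Ia e || move_II e
  end.

(* q~(tau, x); only meaningful when some move applies at x *)
Definition qtilde (p : apath) (x : marker p) : apath :=
  match x with
  | inl v => glue (star_o v) false
  | inr e => if move_Ia e then glue [set asrc e; atgt e] false
             else glue [set asrc e; atgt e] true
  end.

(* Main.v *)
Require Import Defs.
From mathcomp Require Import all_boot all_order all_algebra.
From mathcomp Require Import zify.
Import GRing.Theory Num.Theory.
Set Implicit Arguments. Unset Strict Implicit. Unset Printing Implicit Defensive.

Lemma wpath_glue (p : apath) (S : {set node p}) (m : bool) :
  wpath (glue S m) =
  (wedge (AEdge m (sub_ends1 S To) (sub_ends1 S Tu) (sub_ends1 S Ts)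
                  (sub_ends2 S To) (sub_ends2 S Tu) (sub_ends2 S Ts))
   + \sum_(v | v \notin S) wedge (alab v))%R.
Proof.
rewrite /wpath (bigD1 None) //=; congr (_ + _)%R.
rewrite (reindex_omap Some id) /=; last by case.
rewrite [RHS](eq_bigl (fun v => v \in [pred v | v \notin S])) // [RHS]big_sub /=.
by apply: eq_bigl => x; rewrite eqxx.
Qed.

Definition inall (p : apath) (S : {set node p}) : {set arrow p} :=
  [set e | (asrc e \in S) && (atgt e \in S)].

Lemma cross_arrow (p : apath) (S : {set node p}) u w :
  (forall u v : node p, connect (@adj p) u v) ->
  u \in S -> w \notin S ->
  exists e : arrow p, (e \notin inall S) && ((asrc e \in S) || (atgt e \in S)).
Proof.
move=> Hc uS wS.
case: (boolP [exists e : arrow p, (e \notin inall S) && ((asrc e \in S) || (atgt e \in S))]).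
  by move/existsP.
move/existsPn => H.
have cl : closed (@adj p) (mem S).
  move=> x y /existsP [e He]; have := H e; rewrite /inall !inE negb_and.
  by case/orP: He => /andP [/eqP <- /eqP <-]; case: (asrc e \in S); case: (atgt e \in S).
have := closed_connect cl (Hc u w). move=> h. exfalso. have h2 : (u \in S) = (w \in S) by exact: h. by move: h2; rewrite uS (negbTE wS).
Qed.

Lemma out_bound (p : apath) k (S : {set node p}) :
  (forall u v : node p, connect (@adj p) u v) ->
  #|~: S| = k -> S != set0 ->
  (#|node p| - #|S| <= #|~: inall S|)%N.
Proof.
move=> Hc; elim: k S => [|k IH] S hk hS.
  by move: hk (cardsC S); lia.
have [w wS] : exists w, w \in ~: S.
  by apply/set0Pn; rewrite -card_gt0 hk.
have [u uS] := set0Pn _ hS.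
rewrite inE in wS.
have [e /andP [eS hor]] := cross_arrow Hc uS wS.
pose y := if asrc e \in S then atgt e else asrc e.
have yS : y \notin S.
  move: eS; rewrite /y !inE; case hs: (asrc e \in S) => //=; by rewrite hs.
have ne : y |: S != set0 by apply/set0Pn; exists y; rewrite !inE eqxx.
have hk' : #|~: (y |: S)| = k.
  move: hk (cardsC S) (cardsC (y |: S)); rewrite cardsU1 yS; lia.
have := IH _ hk' ne.
have hsub : ~: inall (y |: S) \proper ~: inall S.
  apply/properP; split.
    apply/subsetP => f; rewrite /inall !inE !negb_and => /orP [] h; apply/orP.
      by left; apply: contra h => h'; rewrite h' orbT.
    by right; apply: contra h => h'; rewrite h' orbT.
  exists e; first by rewrite inE.
  rewrite /inall !inE negbK /y; case: (asrc e \in S) hor => /=; last by move=> ->; rewrite !orbT eqxx.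
  by rewrite eqxx orbT.
have := proper_card hsub. rewrite cardsU1 yS. lia.
Qed.

Lemma forest (p : apath) (S : {set node p}) :
  is_apath p -> S != set0 -> (#|inall S| < #|S|)%N.
Proof.
case=> h0 hA Hc _ _ hS.
have := out_bound Hc (erefl _) hS.
have := cardsC (inall S).
have := max_card S.
have : (0 < #|S|)%N by rewrite card_gt0.
lia.
Qed.

Lemma reduce (p : apath) (S : {set node p}) (m : bool) :
  wedge (AEdge m (sub_ends1 S To) (sub_ends1 S Tu) (sub_ends1 S Ts)
                  (sub_ends2 S To) (sub_ends2 S Tu) (sub_ends2 S Ts))
  = (\sum_(v in S) wedge (alab v) - 1)%R ->
  wpath (glue S m) = (wpath p - 1)%R.
Proof.
move=> h; rewrite wpath_glue h /wpath.
have -> : (\sum_(v : node p) wedge (alab v) = \sum_(v in S) wedge (alab v) + \sum_(v | v \notin S) wedge (alab v))%R.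
  by rewrite (bigID (mem S)).
by rewrite addrAC.
Qed.

Lemma tgt_pos (p : apath) (e : arrow p) :
  is_apath p -> (0 < ends1 (alab (atgt e)) (asig e))%N.
Proof.
case=> _ _ _ _ H; have [h _] := H (atgt e) (asig e).
apply: leq_trans h; rewrite card_gt0; apply/set0Pn; exists e; by rewrite !inE !eqxx.
Qed.

Lemma src_pos (p : apath) (e : arrow p) :
  is_apath p -> (0 < ends2 (alab (asrc e)) (asig e))%N.
Proof.
case=> _ _ _ _ H; have [_ h] := H (asrc e) (asig e).
apply: leq_trans h; rewrite card_gt0; apply/set0Pn; exists e; by rewrite !inE !eqxx.
Qed.

Lemma two (p : apath) (e : arrow p) : is_apath p ->
  asrc e != atgt e /\
  forall f, (asrc f \in [set asrc e; atgt e]) && (atgt f \in [set asrc e; atgt e]) -> f = e.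
Proof.
move=> H.
have ne : [set asrc e; atgt e] != set0 by apply/set0Pn; exists (asrc e); rewrite !inE eqxx.
have := forest H ne; rewrite cards2.
have ein : e \in inall [set asrc e; atgt e] by rewrite !inE !eqxx !orbT.
move=> hc; split.
  apply: contraTneq hc => eq; rewrite eq eqxx /= -ltnNge ltnS card_gt0; apply/set0Pn; exists e; move: ein; by rewrite eq.
move=> f hf; apply/eqP; apply: contraTT hc => nfe.
have : [set e; f] \subset inall [set asrc e; atgt e].
  apply/subsetP => g; rewrite !inE => /orP [] /eqP ->; [by rewrite !eqxx ?orbT | by move: hf; rewrite !inE].
move/subset_leq_card; rewrite cards2 eq_sym nfe; move=> h2; rewrite -leqNgt.
by apply: leq_trans h2; case: (asrc e != atgt e).
Qed.

Lemma inner_two (p : apath) (e : arrow p) X : is_apath p ->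
  inner_arrows [set asrc e; atgt e] X = (asig e == X) :> nat.
Proof.
move=> H; have [_ h] := two e H.
rewrite /inner_arrows.
have -> : [set f | (asrc f \in [set asrc e; atgt e]) && (atgt f \in [set asrc e; atgt e]) && (asig f == X)]
  = if asig e == X then [set e] else set0.
  apply/setP => f; rewrite inE.
  case hf: ((asrc f \in [set asrc e; atgt e]) && (atgt f \in [set asrc e; atgt e])) => /=.
    by rewrite (h f hf); case: (asig e == X); rewrite ?inE ?eqxx.
  case: (asig e == X); rewrite ?inE //; apply/esym/negbTE; apply: contraFN hf => /eqP ->.
  by rewrite !inE !eqxx !orbT.
by case: (asig e == X); rewrite ?cards1 ?cards0.
Qed.

Lemma case_e (p : apath) (e : arrow p) : is_apath p ->
  move_Ia e || move_II e -> wpath (qtilde (inr e)) = (wpath p - 1)%R.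
Proof.
move=> H hm; rewrite /qtilde.
have [ne _] := two e H.
have hsum : forall F : node p -> int, (\sum_(v in [set asrc e; atgt e]) F v = F (asrc e) + F (atgt e))%R.
  by move=> F; rewrite big_setU1 ?inE // big_set1.
case hIa: (move_Ia e) => /=; apply: reduce; rewrite hsum.
  move: hIa => /andP [ha hb]; rewrite /wedge /= (negbTE ha) (negbTE hb) //.
rewrite hIa /= in hm; move/andP: hm => [ha hb].
rewrite /boundary in ha hb; rewrite /wedge /= ha hb /sub_ends1 /sub_ends2 !inner_two // !big_setU1 ?inE // !big_set1 /=.
have ht := tgt_pos e H; have hs := src_pos e H.
case: H => _ _ _ hv _; have := hv (atgt e); rewrite /valid_aedge hb => /andP [/eqP ho _].
move: ht hs; case: (asig e) => /= ht hs.
- by rewrite ho in ht.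
- lia.
- lia.
Qed.

Lemma case_v (p : apath) (v : node p) : is_apath p ->
  move_Ib v -> wpath (qtilde (inl v)) = (wpath p - 1)%R.
Proof.
move=> H /andP [hb hl]; rewrite /qtilde; apply: reduce.
set S := star_o v in hl *.
rewrite /boundary in hb.
have hstar : forall w, w \in S -> w != v -> adj v w.
  by move=> w; rewrite !inE => /orP [-> //| /andP [_ ha]] _.
have vS : v \in S by rewrite !inE eqxx.
have hint : forall w, w \in S -> w != v -> mu (alab w) = false.
  by move=> w; rewrite !inE => /orP [-> //| /andP [hi _]] _; apply/negbTE.
clearbody S.
have Hc := H; case: Hc => _ _ _ hv hcon.
have vv := hv v; rewrite /valid_aedge hb in vv; case/andP: vv => /eqP ho1 /eqP ho2.
have hvw : forall w, w \in S -> w != v -> (s1 (alab w) = 0 /\ u2 (alab w) = 0)%N.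
  move=> w wS wv; have := hv w; rewrite /valid_aedge (hint w wS wv).
  by case/andP => /eqP -> /eqP ->.
pose A X := [set e | (asrc e \in S) && (atgt e \in S) && (asig e == X)].
have hA : forall X, inner_arrows S X = #|A X| by [].
case/andP: hl; rewrite /sub_ends1 /sub_ends2 !hA => hl1 hl2.
have hA1 : (s1 (alab v) <= #|A Ts|)%N.
  rewrite subn_eq0 in hl1; apply: leq_trans hl1.
  by rewrite (bigD1 v) //= leq_addr.
have hA2 : (u2 (alab v) <= #|A Tu|)%N.
  rewrite subn_eq0 in hl2; apply: leq_trans hl2.
  by rewrite (bigD1 v) //= leq_addr.
have hC1 : (#|A Ts| <= s1 (alab v))%N.
  have [h _] := hcon v Ts; apply: leq_trans h; apply: subset_leq_card.
  apply/subsetP => e; rewrite !inE => /andP [/andP [_ tS] /eqP hs]; rewrite hs eqxx andbT.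
  apply/negPn/negP => tv.
  have := tgt_pos e H; rewrite hs /=.
  by have [-> _] := hvw _ tS tv.
have hC2 : (#|A Tu| <= u2 (alab v))%N.
  have [_ h] := hcon v Tu; apply: leq_trans h; apply: subset_leq_card.
  apply/subsetP => e; rewrite !inE => /andP [/andP [sS _] /eqP hs]; rewrite hs eqxx andbT.
  apply/negPn/negP => sv.
  have := src_pos e H; rewrite hs /=.
  by have [_ ->] := hvw _ sS sv.
have hE : (#|A Ts| + #|A Tu| <= #|inall S|)%N.
  rewrite -cardsUI.
  have -> : A Ts :&: A Tu = set0.
    by apply/setP => e; rewrite !inE; case: (asig e); rewrite ?andbF.
  rewrite cards0 addn0; apply: subset_leq_card; apply/subsetP => e.
  by rewrite !inE => /orP [] /andP [-> _].
have hF : (#|inall S| < #|S|)%N by apply: forest => //; apply/set0Pn; exists v.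
have hG : (#|S :\ v| <= #|A Ts| + #|A Tu|)%N.
  pose g e := if asrc e == v then atgt e else asrc e.
  apply: (@leq_trans #|g @: (A Ts :|: A Tu)|).
    apply: subset_leq_card; apply/subsetP => w; rewrite !inE => /andP [wv wS].
    have /existsP [e he] := hstar w wS wv.
    apply/imsetP; exists e; last first.
      rewrite /g; case/orP: he => /andP [/eqP -> /eqP ->]; first by rewrite eqxx.
      by rewrite (negbTE wv).
    have eS : (asrc e \in S) && (atgt e \in S).
      by case/orP: he => /andP [/eqP -> /eqP ->]; rewrite vS wS.
    rewrite !inE eS /=.
    move: he; case hs: (asig e) => //.
    case/orP => /andP [/eqP es /eqP et].
      by have := src_pos e H; rewrite hs es /= ho2.
    by have := tgt_pos e H; rewrite hs et /= ho1.
  apply: leq_trans (leq_imset_card _ _) _.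
  by rewrite -cardsUI leq_addr.
have hk : (s1 (alab v) + u2 (alab v) = #|S :\ v|)%N.
  move: hF; rewrite (cardsD1 v) vS; lia.
rewrite /wedge /= (big_setD1 v vS) /= hb.
rewrite (eq_bigr (fun _ => 1%R)); last first.
  by move=> w; rewrite !inE => /andP [wv wS]; rewrite (hint w wS wv).
rewrite sumr_const natz -hk.
lia.
Qed.

Theorem lemma3p8 (p : apath) (x : marker p) :
  is_apath p -> move_applies x ->
  wpath (qtilde x) = (wpath p - 1)%R.
Proof.
case: x => [v|e] H hm; first exact: case_v.
exact: case_e.
Qed.
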